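(* Let $\Delta$ be a simplicial forest. Then the greatest common divisor of the maximal minors of the incidence matrix of $\Delta$ is $1$.
   Context: A simplicial complex $\Delta$ is a collection of subsets (faces) of a finite vertex set closed under taking subsets; facets are maximal faces; write $\Delta=\langle F_1,\dots,F_s\rangle$ when $F_1,\dots,F_s$ are the facets. The incidence matrix of $\Delta=\langle F_1,\dots,F_s\rangle$ with vertices $v_1,\dots,v_n$ is the $s\times n$ matrix whose $(i,j)$ entry is $1$ if $v_j\in F_i$ and $0$ otherwise. A facet $F$ of $\Delta$ is a leaf if either $F$ is the only facet of $\Delta$, or there is a facet $G\neq F$ of $\Delta$ with $F\cap F'\subseteq F\cap G$ for every facet $F'\neq F$ of $\Delta$. $\Delta$ is a simplicial tree if $\Delta$ is connected and every subcomplex $\langle F_{i_1},\dots,F_{i_r}\rangle$ generated by a nonempty subset of the facets has a leaf; $\Delta$ is a simplicial forest if every connected component of $\Delta$ is a simplicial tree. *)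

(* Defs.v *)
From mathcomp Require Import all_boot all_order all_algebra.
Set Implicit Arguments. Unset Strict Implicit. Unset Printing Implicit Defensive.
Import GRing.Theory Num.Theory.
Local Open Scope ring_scope.

(* A simplicial complex on the vertex set 'I_n given by its facets
   F : 'I_s -> {set 'I_n} (facets indexed by 'I_s). *)

Definition facet_list (s n : nat) (F : 'I_s -> {set 'I_n}) : Prop :=
  (forall i j : 'I_s, i != j -> ~~ (F i \subset F j)) /\
  (forall v : 'I_n, exists i : 'I_s, v \in F i).

Definition is_leaf (s n : nat) (F : 'I_s -> {set 'I_n}) (I : {set 'I_s})
    (i : 'I_s) : Prop :=
  i \in I /\
  (I = [set i] \/
   exists2 j, (j \in I) && (j != i) &
     forall k, k \in I -> k != i -> F i :&: F k \subset F i :&: F j).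

Definition facet_adj (s n : nat) (F : 'I_s -> {set 'I_n}) : rel 'I_s :=
  fun i j => F i :&: F j != set0.

Definition sub_connected (s n : nat) (F : 'I_s -> {set 'I_n}) (I : {set 'I_s})
    : Prop :=
  forall i j, i \in I -> j \in I ->
    connect (fun a b => [&& a \in I, b \in I & facet_adj F a b]) i j.

Definition is_simplicial_tree (s n : nat) (F : 'I_s -> {set 'I_n})
    (I : {set 'I_s}) : Prop :=
  sub_connected F I /\
  forall J : {set 'I_s}, J \subset I -> J != set0 -> exists i, is_leaf F J i.

Definition facet_component (s n : nat) (F : 'I_s -> {set 'I_n}) (i : 'I_s)
    : {set 'I_s} := [set j | connect (facet_adj F) i j].

Definition is_simplicial_forest (s n : nat) (F : 'I_s -> {set 'I_n}) : Prop :=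
  forall i : 'I_s, is_simplicial_tree F (facet_component F i).

Definition incidence_matrix (s n : nat) (F : 'I_s -> {set 'I_n}) : 'M[int]_(s, n) :=
  \matrix_(i < s, j < n) ((j \in F i) : nat)%:R.

Definition strictly_increasing (k m : nat) (f : 'I_k -> 'I_m) : bool :=
  [forall i : 'I_k, forall j : 'I_k, (i < j)%N ==> (f i < f j)%N].

Definition gcd_maximal_minors (s n : nat) (M : 'M[int]_(s, n)) : int :=
  \big[gcdz/0%Z]_(f : {ffun 'I_(minn s n) -> 'I_s} | strictly_increasing f)
    \big[gcdz/0%Z]_(g : {ffun 'I_(minn s n) -> 'I_n} | strictly_increasing g)
      \det (mxsub f g M).

(* Main.v *)
Require Import Defs.
From mathcomp Require Import all_boot all_order all_algebra all_fingroup.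
Set Implicit Arguments. Unset Strict Implicit. Unset Printing Implicit Defensive.
Import GRing.Theory Num.Theory.

Lemma free_vertex s n (F : 'I_s -> {set 'I_n}) :
  facet_list F -> is_simplicial_forest F -> (forall i, F i != set0) ->
  forall J : {set 'I_s}, J != set0 ->
  exists i, exists x, [/\ i \in J, x \in F i &
     forall k, k \in J -> k != i -> x \notin F k].
Proof.
move=> [Hinc Hcov] Hfor Hne J /set0Pn [j0 Hj0].
set C := facet_component F j0.
have HC : forall i k x, i \in C -> x \in F i -> x \in F k -> k \in C.
  move=> i k x; rewrite /C /facet_component !inE => Hi Hx Hk.
  apply: connect_trans Hi (connect1 _).
  by rewrite /facet_adj; apply/set0Pn; exists x; rewrite inE Hx Hk.
have [_ Hleaf] := Hfor j0.
have Hj0C : j0 \in C by rewrite /C /facet_component inE connect0.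
have [|i [HiJ' Hl]] := Hleaf (J :&: C) (subsetIr _ _).
  by apply/set0Pn; exists j0; rewrite inE Hj0 Hj0C.
move: HiJ'; rewrite inE => /andP [HiJ HiC].
case: Hl => [E | [j /andP [HjJ' Hji] Hsub]].
  have /set0Pn [x Hx] := Hne i.
  exists i, x; split => // k HkJ Hki; apply/negP => Hxk.
  have : k \in J :&: C by rewrite inE HkJ (HC i k x).
  by rewrite E inE (negbTE Hki).
have /subsetPn [x Hx Hxj] : ~~ (F i \subset F j) by apply: Hinc; rewrite eq_sym.
exists i, x; split => // k HkJ Hki; apply/negP => Hxk.
have HkJ' : k \in J :&: C by rewrite inE HkJ (HC i k x).
have := subsetP (Hsub k HkJ' Hki) x.
rewrite !inE Hx Hxk /= => /(_ isT).
by rewrite (negbTE Hxj).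
Qed.

Lemma order_exists s n (F : 'I_s -> {set 'I_n}) (d : 'I_s -> 'I_n) :
  (forall J : {set 'I_s}, J != set0 ->
    exists i, exists x, [/\ i \in J, x \in F i &
     forall k, k \in J -> k != i -> x \notin F k]) ->
  forall J : {set 'I_s}, exists v : 'I_s -> 'I_n, exists r : 'I_s -> nat,
   [/\ forall i, i \in J -> v i \in F i, {in J &, injective r} &
       forall i j, i \in J -> j \in J -> v i \in F j -> r j <= r i].
Proof.
move=> Hfree J; have [m Hm] := ubnP #|J|; elim: m J Hm => // m IH J Hm.
have [-> | Jne] := eqVneq J set0.
  by exists d, (fun _ => 0); split => [i|i|i j]; rewrite inE.
have [i0 [x0 [Hi0 Hx0 Hk]]] := Hfree J Jne.
have [|v [r [Hv Hr Hvr]]] := IH (J :\ i0).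
  by rewrite -ltnS (leq_trans _ Hm) // ltnS (cardsD1 i0 J) Hi0.
exists (fun k => if k == i0 then x0 else v k).
exists (fun k => if k == i0 then 0 else (r k).+1).
split.
- move=> i Hi; case: eqP => [-> //|/eqP ne]; apply: Hv; by rewrite !inE ne.
- move=> a b Ha Hb /=.
  case: (a =P i0) => [ea|/eqP na]; case: (b =P i0) => [eb|/eqP nb] //.
  + by rewrite ea eb.
  + by move=> [] /Hr; apply; rewrite !inE ?na ?nb.
- move=> i j Hi Hj /=.
  case: (eqVneq j i0) => [//|nj]; case: (eqVneq i i0) => [_ Hx|ni Hx].
    by move: (Hk j Hj nj); rewrite Hx.
  by rewrite ltnS; apply: Hvr => //; rewrite !inE ?ni ?nj.
Qed.
Lemma sorted_enum_ord n (V : {set 'I_n}) : sorted (fun a b : 'I_n => (a < b)%N) (enum V).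
Proof.
rewrite -deprecated_filter_index_enum; apply: sorted_filter.
  by move=> a b c; apply: ltn_trans.
have : sorted ltn (map val (enum 'I_n)) by rewrite val_enum_ord iota_ltn_sorted.
by rewrite sorted_map enumT /index_enum unlock.
Qed.

Lemma sum_eq_le (I : finType) (a b : I -> nat) :
  (forall i, a i <= b i) -> \sum_i a i = \sum_i b i -> forall i, a i = b i.
Proof.
move=> H E i; apply/eqP; rewrite eqn_leq H /= leqNgt; apply/negP=> lt.
have : \sum_i a i < \sum_i b i.
  rewrite (bigD1 i) // [X in _ < X](bigD1 i) //= -addSn leq_add //.
  by apply: leq_sum => j _; apply: H.
by rewrite E ltnn.
Qed.


Local Open Scope ring_scope.


Lemma det_pm1 m (B : 'M[int]_m) (q : {perm 'I_m}) (r : 'I_m -> nat) :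
  injective r -> (forall i, B i (q i) = 1) ->
  (forall i j, B j (q i) != 0 -> (r j <= r i)%N) -> \det B = (-1) ^+ q.
Proof.
move=> rinj Hd Hr; rewrite /determinant (bigD1 q) //=.
rewrite big1 ?mulr1; last by move=> i _; apply: Hd.
rewrite big1 ?addr0 // => p pq.
case: (pickP (fun i => B i (p i) == 0)) => [i /eqP Hi|H].
  by rewrite (bigD1 i) //= Hi mul0r mulr0.
exfalso; move/negP: pq; apply; apply/eqP/permP => i.
pose t := fun i => (q^-1)%g (p i).
have tinj : injective t by move=> a b /perm_inj /perm_inj.
have Hle : forall i, (r i <= r (t i))%N.
  move=> k; apply: Hr; rewrite /t permKV; apply/negP => /eqP E.
  by move: (H k); rewrite E eqxx.
have := sum_eq_le Hle (reindex_inj (F := r) tinj) i.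
by move/rinj => E; rewrite [in RHS]E /t permKV.
Qed.

Lemma abs_biggcd (I : finType) (P : pred I) (G : I -> int) :
  `|\big[gcdz/0%Z]_(i | P i) G i|%N = \big[gcdn/0%N]_(i | P i) `|G i|%N.
Proof. apply: (big_morph (fun x : int => `|x|%N)) => //.
Qed.

Lemma biggcd_ge0 (I : finType) (P : pred I) (G : I -> int) :
  0 <= \big[gcdz/0%Z]_(i | P i) G i.
Proof. by apply: (big_rec (fun x : int => 0 <= x)) => // i x _ _; rewrite /gcdz. Qed.

Lemma gcd_one k s n (M : 'M[int]_(s, n)) (f0 : {ffun 'I_k -> 'I_s})
   (g0 : {ffun 'I_k -> 'I_n}) :
  strictly_increasing f0 -> strictly_increasing g0 ->
  `|\det (mxsub f0 g0 M)|%N = 1%N ->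
  \big[gcdz/0%Z]_(f : {ffun 'I_k -> 'I_s} | strictly_increasing f)
    \big[gcdz/0%Z]_(g : {ffun 'I_k -> 'I_n} | strictly_increasing g)
      \det (mxsub f g M) = 1.
Proof.
move=> Hf Hg Hd.
have := biggcd_ge0 (fun f : {ffun 'I_k -> 'I_s} => strictly_increasing f) (fun f => \big[gcdz/0%Z]_(g : {ffun 'I_k -> 'I_n} | strictly_increasing g)
      \det (mxsub f g M)).
set d := \big[gcdz/0%Z]_(_ | _) _ => d0.
have : (`|d| %| 1)%N.
  rewrite /d abs_biggcd; apply: (biggcdn_inf f0) => //.
  rewrite abs_biggcd; apply: (biggcdn_inf g0) => //.
  by rewrite Hd.
rewrite dvdn1 => /eqP E.
by rewrite -[d]gez0_abs // E.
Qed.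

Lemma gcd_k0 s n (M : 'M[int]_(s, n)) :
  \big[gcdz/0%Z]_(f : {ffun 'I_0 -> 'I_s} | strictly_increasing f)
    \big[gcdz/0%Z]_(g : {ffun 'I_0 -> 'I_n} | strictly_increasing g)
      \det (mxsub f g M) = 1.
Proof.
apply: (gcd_one (f0 := [ffun i => widen_ord (leq0n s) i])
                (g0 := [ffun i => widen_ord (leq0n n) i])).
- by apply/forallP => -[].
- by apply/forallP => -[].
- by rewrite det_mx00.
Qed.

Theorem proposition2p6 (s n : nat) (F : 'I_s -> {set 'I_n}) :
  facet_list F -> is_simplicial_forest F ->
  gcd_maximal_minors (incidence_matrix F) = 1.
Proof.
move=> Hfl Hfor; rewrite /gcd_maximal_minors.
have [s0|spos] := posnP s.
  have e : minn s n = 0%N by rewrite s0 min0n.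
  by move: (minn s n) e => k e; subst k; apply: gcd_k0.
have [n0|npos] := posnP n.
  have e : minn s n = 0%N by rewrite n0 minn0.
  by move: (minn s n) e => k e; subst k; apply: gcd_k0.
pose x0 : 'I_n := Ordinal npos.
have Hne : forall i, F i != set0.
  move=> i; apply/negP => /eqP E.
  have [k Hk] := Hfl.2 x0.
  have ki : i != k by apply/eqP => e; move: Hk; rewrite -e E inE.
  by move: (Hfl.1 i k ki); rewrite E sub0set.
have [v [r [Hv Hr Hvr]]] :=
  order_exists (fun _ => x0) (free_vertex Hfl Hfor Hne) [set: 'I_s].
have {}Hv : forall i, v i \in F i by move=> i; apply: Hv; rewrite inE.
have {}Hvr : forall i j, v i \in F j -> (r j <= r i)%N.
  by move=> i j; apply: Hvr; rewrite inE.
have rinj : injective r by move=> a b e; apply: Hr; rewrite ?inE.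
have vinj : injective v.
  move=> a b e; apply: rinj; apply/eqP; rewrite eqn_leq.
  by apply/andP; split; apply: Hvr; [rewrite -e | rewrite e]; apply: Hv.
have sn : (s <= n)%N by have := @leq_card _ _ v vinj; rewrite !card_ord.
have e : minn s n = s by apply/minn_idPl.
move: (minn s n) e => k e; subst k.
set V := v @: [set: 'I_s].
have eV : #|V| = s by rewrite card_imset // cardsT card_ord.
pose g := [ffun k : 'I_s => enum_val (cast_ord (esym eV) k)].
have Hvi : forall i, v i \in V by move=> i; apply: imset_f; rewrite inE.
pose q := fun i => cast_ord eV (enum_rank_in (Hvi i) (v i)).
have gq : forall i, g (q i) = v i.
  by move=> i; rewrite /g /q ffunE cast_ordK (enum_rankK_in (Hvi i) (Hvi i)).
have qinj : injective q by move=> a b e; apply: vinj; rewrite -!gq e.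
have gq' : forall i, enum_val (cast_ord (esym eV) (q i)) = v i.
  by move=> i; rewrite -gq ffunE.
apply: (gcd_one (f0 := [ffun i => i]) (g0 := g)).
- by apply/forallP => i; apply/forallP => j; apply/implyP; rewrite !ffunE.
- apply/forallP => i; apply/forallP => j; apply/implyP => ij.
  rewrite !ffunE !(enum_val_nth x0).
  apply: (sorted_ltn_nth (leT := fun a b : 'I_n => (a < b)%N)).
  + by move=> a b c; apply: ltn_trans.
  + exact: sorted_enum_ord.
  + by rewrite inE -cardE.
  + by rewrite inE -cardE.
  + by [].
rewrite (det_pm1 (q := perm qinj) (r := r)) //.
- by case: odd_perm.
- by move=> i; rewrite !mxE permE !ffunE gq' Hv.
- move=> i j; rewrite !mxE permE !ffunE gq'.
  by case: (boolP (v i \in F j)) => [/Hvr|].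
Qed.
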